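(* Let $F$ be a finite field, let $f,g,q\in F[\lambda]$ with $f,g$ relatively prime and $q=\sum_{i=0}^m q_i\lambda^i$ monic and irreducible of degree $m$, and let $Q(\lambda)=\mathfrak p_q(g,f):=\sum_{i=0}^m q_i\,f(\lambda)^i g(\lambda)^{m-i}$. Assume $Q\neq 0$. Let $L$ be the splitting field of $q$ over $F$ and $\alpha\in L$ a root of $q$. Then the number of distinct monic irreducible factors of $Q$ in $F[\lambda]$ equals the number of distinct monic irreducible factors of $f(\lambda)-\alpha g(\lambda)$ in $L[\lambda]$.
   Context: $\mathfrak p_q(g,f)=g^{\deg q}\,q(f/g)$ is the homogenization of $q$ evaluated at $(g,f)$. A polynomial $\mathfrak p_q(g,f)$ with $f,g$ coprime and $q$ monic irreducible is called a candidate. *)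

(* Defs.v *)
From HB Require Import structures.
From mathcomp Require Import all_boot all_order all_algebra all_field.
Set Implicit Arguments. Unset Strict Implicit. Unset Printing Implicit Defensive.
Import GRing.Theory.
Local Open Scope ring_scope.

Definition homogp (K : fieldType) (q g f : {poly K}) : {poly K} :=
  \sum_(i < size q) q`_i *: (f ^+ i * g ^+ ((size q).-1 - i)).

Definition num_monic_irr_factors (K : fieldType) (P : {poly K}) (n : nat) : Prop :=
  exists s : seq {poly K},
    [/\ uniq s,
        (forall p : {poly K},
            p \in s <-> [/\ p \is monic, irreducible_poly p & p %| P])
      & size s = n].

(* Main.v *)
Require Import Defs.
From HB Require Import structures.
From mathcomp Require Import all_boot all_order all_algebra all_field.
From Stdlib Require Import Classical.
From mathcomp Require Import zify ring.
Import GRing.Theory.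
Set Implicit Arguments. Unset Strict Implicit. Unset Printing Implicit Defensive.
Local Open Scope ring_scope.

Lemma irr_eqp (K : fieldType) (p p' : {poly K}) :
  p %= p' -> irreducible_poly p -> irreducible_poly p'.
Proof.
move=> He [sz irr]; split; first by rewrite -(eqp_size He).
move=> d d1 dd; have dp : d %| p by rewrite (eqp_dvdr _ He).
exact: eqp_trans (irr d d1 dp) He.
Qed.

Lemma irr_dvdM (K : fieldType) (h a b : {poly K}) :
  irreducible_poly h -> h %| a * b -> (h %| a) \/ (h %| b).
Proof.
move=> hi hab; case: (irredp_XsubCP hi (dvdp_gcdl h a)) => e.
  right; rewrite gcdp_eqp1 in e.
  by rewrite -(Gauss_dvdpr b e).
left; rewrite eqp_sym in e.
by apply: dvdp_trans (dvdp_gcdr h a); rewrite (eqp_dvdl _ e) dvdpp.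
Qed.

Lemma irr_dvd_prod (K : fieldType) (I : eqType) (r : seq I) (F : I -> {poly K}) h :
  irreducible_poly h -> h %| \prod_(i <- r) F i -> exists2 i, i \in r & h %| F i.
Proof.
move=> hi; elim: r => [|i r IH].
  rewrite big_nil dvdp1 => /eqP e; case: hi; by rewrite e.
rewrite big_cons => /(irr_dvdM hi) [d|/IH [j jr d]].
  by exists i; rewrite ?mem_head.
by exists j; rewrite // in_cons jr orbT.
Qed.

Lemma irr_factor_gen (K : fieldType) (Pr : {poly K} -> Prop) :
  (forall d e, Pr (d * e) -> Pr d \/ Pr e) ->
  (forall d, d != 0 -> Pr d -> (1 < size d)%N) ->
  (forall c d, c != 0 -> Pr d -> Pr (c *: d)) ->
  forall D, D != 0 -> Pr D ->
  exists P, [/\ P \is monic, irreducible_poly P, P %| D & Pr P].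
Proof.
move=> HM Hs HZ D.
elim: {D}(size D) {-2}D (leqnn (size D)) => [|n IH] D.
  by rewrite leqn0 size_poly_eq0 => /eqP -> /eqP.
move=> szD nzD PD.
have lc : lead_coef D != 0 by rewrite lead_coef_eq0.
have [iD|niD] := classic (irreducible_poly D).
  exists ((lead_coef D)^-1 *: D); split.
  - by apply/monicP; rewrite lead_coefZ mulVf.
  - by apply: irr_eqp iD; rewrite eqp_sym eqp_scale // invr_eq0.
  - by rewrite dvdpZl // invr_eq0.
  - by apply: HZ; rewrite // invr_eq0.
have s1 := Hs D nzD PD.
have [d [d1 dD ndD]] : exists d : {poly K}, [/\ size d != 1, d %| D & ~~ (d %= D)].
  apply: NNPP => H; apply: niD; split=> // d d1 dD.
  by apply: NNPP => nd; apply: H; exists d; split=> //; apply/negP.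
have nzd : d != 0 by apply: contraNneq nzD => e; move: dD; rewrite e dvd0p.
have sd : (1 < size d)%N.
  by move: d1; rewrite ltn_neqAle eq_sym => ->; rewrite size_poly_gt0 nzd.
have ltd : (size d < size D)%N.
  rewrite ltn_neqAle (dvdp_size_eqp dD) ndD /=; exact: dvdp_leq.
set e := D %/ d.
have De : D = e * d by rewrite divpK.
have nze : e != 0 by apply: contraNneq nzD => h; rewrite De h mul0r.
have lte : (size e < size D)%N.
  have H1 : (0 < size e)%N by rewrite size_poly_gt0.
  have H2 := size_mul nze nzd; rewrite -De -subn1 in H2.
  rewrite H2 -addnBA; [by rewrite -{1}[size e]addn0 ltn_add2l subn_gt0 | exact: ltnW sd].
rewrite De in PD; case: (HM _ _ PD) => [Pe|Pd].
  have [P [m i Pe' PP]] := IH e (leq_trans lte szD) nze Pe.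
  by exists P; split=> //; rewrite De dvdp_mulr.
have [P [m i Pd' PP]] := IH d (leq_trans ltd szD) nzd Pd.
by exists P; split=> //; rewrite De dvdp_mull.
Qed.

Lemma list_of_pred (T : eqType) (U : seq T) (P : T -> Prop) :
  (forall x, P x -> x \in U) -> exists s, uniq s /\ forall x, x \in s <-> P x.
Proof.
elim: U P => [|a U IH] P HP.
  by exists [::]; split=> // x; split=> // /HP.
have [s [us Hs]] := IH (fun x => P x /\ x != a) (fun x '(conj px xa) =>
   ltac:(move: (HP x px); rewrite in_cons (negbTE xa) //)).
have [Pa|nPa] := classic (P a).
  exists (a :: s); split.
    by rewrite /= us andbT; apply/negP => /Hs [_ /eqP].
  move=> x; rewrite in_cons; split.
    by case/orP => [/eqP -> //|/Hs []].
  by move=> px; have [->|xa] := eqVneq x a; rewrite ?eqxx // orbC; apply/orP; left; apply/Hs.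
exists s; split=> // x; split; first by case/Hs.
by move=> px; apply/Hs; split=> //; apply: contraPneq nPa => <-.
Qed.

Lemma poly_bounded (F : finFieldType) (n : nat) :
  exists U : seq {poly F}, forall d : {poly F}, (size d <= n)%N -> d \in U.
Proof.
exists [seq \poly_(i < n) (nth 0 (val t) i) | t <- enum {: n.-tuple F}].
move=> d szd; apply/mapP.
have st : size (mkseq (fun i => d`_i) n) == n by rewrite size_mkseq.
exists (Tuple st); first by rewrite mem_enum.
apply/polyP => j; rewrite coef_poly /=; case: ltnP => hj.
  by rewrite nth_mkseq.
by rewrite nth_default //; exact: leq_trans szd hj.
Qed.

Definition Hn (K : fieldType) (g f : {poly K}) (n : nat) (p : {poly K}) :=
  \sum_(i < n.+1) p`_i *: (f ^+ i * g ^+ (n - i)).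

Lemma homogp_Hn (K : fieldType) (p g f : {poly K}) :
  p != 0 -> homogp p g f = Hn g f (size p).-1 p.
Proof.
rewrite -size_poly_gt0 /homogp /Hn; case: (size p) => [//|k] _ /=.
by [].
Qed.

Lemma Hn_mulX (K : fieldType) (g f : {poly K}) n (p : {poly K}) :
  Hn g f n.+1 (p * 'X) = f * Hn g f n p.
Proof.
rewrite /Hn big_ord_recl coefMX eqxx scale0r add0r mulr_sumr.
apply: eq_bigr => i _; rewrite coefMX /= subSS exprS -mulrA.
by rewrite scalerAr.
Qed.

Lemma Hn_up (K : fieldType) (g f : {poly K}) n (p : {poly K}) :
  (size p <= n.+1)%N -> Hn g f n.+1 p = g * Hn g f n p.
Proof.
move=> sp; rewrite /Hn big_ord_recr /= nth_default // scale0r addr0 mulr_sumr.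
apply: eq_bigr => i _; rewrite /= subSn; last by rewrite -ltnS ltn_ord.
rewrite exprS.
by rewrite mulrCA scalerAr.
Qed.

Lemma Hn_sub (K : fieldType) (g f : {poly K}) n (p q : {poly K}) :
  Hn g f n (p - q) = Hn g f n p - Hn g f n q.
Proof.
by rewrite /Hn -sumrB; apply: eq_bigr => i _; rewrite coefB scalerBl.
Qed.

Lemma Hn_scale (K : fieldType) (g f : {poly K}) n c (p : {poly K}) :
  Hn g f n (c *: p) = c *: Hn g f n p.
Proof.
by rewrite /Hn scaler_sumr; apply: eq_bigr => i _; rewrite coefZ scalerA.
Qed.

Lemma Hn_prod (K : fieldType) (g f : {poly K}) (rs : seq K) :
  Hn g f (size rs) (\prod_(b <- rs) ('X - b%:P)) = \prod_(b <- rs) (f - b *: g).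
Proof.
elim: rs => [|b rs IH].
  by rewrite !big_nil /Hn big_ord_recl big_ord0 addr0 coefC /= scale1r mulr1.
rewrite !big_cons /= [('X - _) * _]mulrC mulrBr [_ * b%:P]mulrC mul_polyC.
rewrite Hn_sub Hn_mulX Hn_scale.
rewrite Hn_up ?IH; last by rewrite size_prod_XsubC.
by rewrite mulrBl scalerAl.
Qed.

Lemma homogp_prod (K : fieldType) (g f : {poly K}) (rs : seq K) :
  homogp (\prod_(b <- rs) ('X - b%:P)) g f = \prod_(b <- rs) (f - b *: g).
Proof.
rewrite homogp_Hn ?monic_neq0 ?monic_prod_XsubC //.
by rewrite size_prod_XsubC /= Hn_prod.
Qed.

Lemma homogp_map (F : fieldType) (L : fieldExtType F) (q g f : {poly F}) :
  map_poly (in_alg L) (homogp q g f) =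
  homogp (map_poly (in_alg L) q) (map_poly (in_alg L) g) (map_poly (in_alg L) f).
Proof.
rewrite /homogp rmorph_sum size_map_poly; apply: eq_bigr => i _.
by rewrite -mul_polyC rmorphM /= map_polyC /= mul_polyC rmorphM !rmorphXn coef_map.
Qed.
Lemma count_match (T1 T2 : eqType) (A : T1 -> Prop) (B : T2 -> Prop)
  (R : T1 -> T2 -> Prop) (sA : seq T1) :
  uniq sA -> (forall x, x \in sA <-> A x) ->
  (forall a, A a -> exists b, B b /\ R a b) ->
  (forall a b1 b2, A a -> B b1 -> B b2 -> R a b1 -> R a b2 -> b1 = b2) ->
  (forall b, B b -> exists a, A a /\ R a b) ->
  (forall b a1 a2, B b -> A a1 -> A a2 -> R a1 b -> R a2 b -> a1 = a2) ->
  exists sB, [/\ uniq sB, (forall y, y \in sB <-> B y) & size sB = size sA].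
Proof.
move=> uA HA ex1 un1 ex2 un2.
have claim : forall s, uniq s -> (forall x, x \in s -> A x) ->
  exists t, [/\ uniq t, size t = size s &
     forall y, y \in t <-> (B y /\ exists a, a \in s /\ R a y)].
  elim=> [|a s IH] /=.
    move=> _ _; exists [::]; split=> // y; split=> //.
    by case=> _ [a []].
  case/andP=> nas us Hs.
  have [t [ut st Ht]] := IH us (fun x xs => Hs x (ltac:(by rewrite in_cons xs orbT))).
  have Aa := Hs a (mem_head _ _).
  have [b [Bb Rab]] := ex1 a Aa.
  have nbt : b \notin t.
    apply/negP => /Ht [_ [a' [a's Ra'b]]].
    have := un2 b a a' Bb Aa (Hs a' (ltac:(by rewrite in_cons a's orbT))) Rab Ra'b.
    by move=> e; move: nas; rewrite e a's.
  exists (b :: t); split; [by rewrite /= nbt ut | by rewrite /= st |].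
  move=> y; rewrite in_cons; split.
    case/orP => [/eqP -> | /Ht [By [a' [a's Ra'y]]]].
      by split=> //; exists a; rewrite mem_head.
    by split=> //; exists a'; rewrite in_cons a's orbT.
  case=> By [a' [a's Ra'y]]; move: a's; rewrite in_cons => /orP [/eqP ea|a's].
    subst a'; by rewrite (un1 a y b Aa By Bb Ra'y Rab) eqxx.
  by apply/orP; right; apply/Ht; split=> //; exists a'.
have [t [ut st Ht]] := claim sA uA (fun x xs => proj1 (HA x) xs).
exists t; split=> // y; split; first by case/Ht.
move=> By; apply/Ht; split=> //.
have [a [Aa Ray]] := ex2 y By; exists a; split=> //; exact/HA.
Qed.
Lemma gal_in (F : finFieldType) (L : splittingFieldType F) (t : gal_of {:L}) :
  t \in ('Gal({:L} / 1%VS))%g.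
Proof. by rewrite gal_kHom ?sub1v // k1AHom. Qed.

Lemma fix_alg (F : finFieldType) (L : splittingFieldType F) (t : gal_of {:L}) (p : {poly F}) :
  map_poly t (map_poly (in_alg L) p) = map_poly (in_alg L) p.
Proof.
by rewrite -map_poly_comp; apply: eq_map_poly => c /=; rewrite rmorph_alg.
Qed.

Lemma map_gal_comp (F : finFieldType) (L : splittingFieldType F) (t s : gal_of {:L}) (p : {poly L}) :
  map_poly s (map_poly t p) = map_poly (t * s)%g p.
Proof.
by rewrite -map_poly_comp; apply: eq_map_poly => c /=; rewrite galM ?memvf.
Qed.

Lemma map_gal1 (F : finFieldType) (L : splittingFieldType F) (p : {poly L}) :
  map_poly (1%g : gal_of {:L}) p = p.
Proof. by apply/polyP => i; rewrite coef_map /= gal_id. Qed.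

Lemma fixed_poly_alg (F : finFieldType) (L : splittingFieldType F) (N : {poly L}) :
  (forall t : gal_of {:L}, map_poly t N = N) -> exists N0, N = map_poly (in_alg L) N0.
Proof.
move=> HN; apply/polyOver1P; apply/polyOverP => i.
have /galois_fixedField <- := @finField_galois F L 1%AS {:L} (sub1v _).
apply/fixedFieldP; first exact: memvf.
by move=> t _; rewrite -{2}(HN t) coef_map.
Qed.
Lemma mon_irr_coprime (K : fieldType) (P1 P2 : {poly K}) :
  P1 \is monic -> P2 \is monic -> irreducible_poly P1 -> irreducible_poly P2 ->
  P1 != P2 -> coprimep P1 P2.
Proof.
move=> m1 m2 i1 i2 ne.
case: (irredp_XsubCP i1 (dvdp_gcdl P1 P2)) => e; first by rewrite -gcdp_eqp1.
have d12 : P1 %| P2 by rewrite -(eqp_dvdl _ e) dvdp_gcdr.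
case: (irredp_XsubCP i2 d12) => e2.
  by case: i1 => s _; move: s; rewrite -size_poly_eq1 in e2; rewrite (eqP e2).
by move: ne; rewrite -(eqp_monic m1 m2) e2.
Qed.

Lemma irr_factor (K : fieldType) (D : {poly K}) : (1 < size D)%N ->
  exists P, [/\ P \is monic, irreducible_poly P & P %| D].
Proof.
move=> sD.
have nzD : D != 0 by rewrite -size_poly_gt0; exact: ltnW.
have [P [m i d _]] := @irr_factor_gen K (fun d => (1 < size d)%N)
  ltac:(move=> d e H; case: (ltnP 1 (size d)) => hd; [by left|];
        case: (ltnP 1 (size e)) => he; [by right|]; exfalso;
        have := leq_trans H (size_mul_leq d e); move: hd he;
        move: (size d) (size e) => a b; lia)
  ltac:(by [])
  ltac:(by move=> c d c0 /=; rewrite size_scale)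
  D nzD sD.
by exists P.
Qed.

Lemma main_split (F : finFieldType) (f g q : {poly F})
  (L : splittingFieldType F) (alpha : L) :
  coprimep f g ->
  q \is monic -> irreducible_poly q ->
  homogp q g f != 0 ->
  splittingFieldFor 1%VS (map_poly (in_alg L) q) fullv ->
  root (map_poly (in_alg L) q) alpha ->
  exists n : nat,
    num_monic_irr_factors (homogp q g f) n /\
    num_monic_irr_factors (map_poly (in_alg L) f - alpha *: map_poly (in_alg L) g) n.
Proof.
move=> cfg mq iq nzQ [rs Hrs defL] ra.
set fL := map_poly (in_alg L) f; set gL := map_poly (in_alg L) g.
set Q := homogp q g f.
set W := fL - alpha *: gL.
have qE : map_poly (in_alg L) q = \prod_(z <- rs) ('X - z%:P).
  by apply/eqP; rewrite -eqp_monic ?map_monic ?monic_prod_XsubC.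
have QE : map_poly (in_alg L) Q = \prod_(z <- rs) (fL - z *: gL).
  by rewrite /Q homogp_map qE homogp_prod.
have ars : alpha \in rs by rewrite -root_prod_XsubC -qE.
have WQ : W %| map_poly (in_alg L) Q by rewrite QE (big_rem _ ars) /= dvdp_mulr.
have Kcop : forall h : {poly L}, h %| fL -> h %| gL -> size h == 1.
  move=> h hf hg; rewrite size_poly_eq1.
  have : coprimep fL gL by rewrite coprimep_map.
  by move/coprimepP; apply.
have Kdist : forall (h : {poly L}) b b', irreducible_poly h -> b != b' ->
    h %| fL - b *: gL -> h %| fL - b' *: gL -> False.
  move=> h b b' ih nb d1 d2.
  have hg : h %| gL.
    have : h %| (fL - b' *: gL) - (fL - b *: gL) by rewrite dvdp_sub.
    have -> : (fL - b' *: gL) - (fL - b *: gL) = (b - b') *: gL.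
      by rewrite -!mul_polyC polyCB; ring.
    by rewrite dvdpZr // subr_eq0.
  have hf : h %| fL.
    have -> : fL = (fL - b *: gL) + b%:P * gL by rewrite mul_polyC subrK.
    by rewrite dvdp_add // dvdp_mull.
  by case: ih => s _; move: s; rewrite (eqP (Kcop h hf hg)).
have mpE : minPoly 1 alpha = map_poly (in_alg L) q.
  have /polyOver1P [p0 Dp] := minPolyOver 1 alpha.
  have d : minPoly 1 alpha %| map_poly (in_alg L) q.
    by apply: minPoly_dvdp; [exact: alg_polyOver | exact: ra].
  rewrite Dp dvdp_map in d.
  case: (irredp_XsubCP iq d) => e.
    exfalso; have r := root_minPoly 1 alpha.
    have nz := monic_neq0 (monic_minPoly 1 alpha).
    have := root_size_gt1 nz r.
    by rewrite Dp size_map_poly; move: e; rewrite -size_poly_eq1 => /eqP ->.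
  apply/eqP; rewrite -eqp_monic ?monic_minPoly ?map_monic // Dp eqp_map.
  by [].
have allE : forall b, b \in rs -> b \in <<1; alpha>>%VS.
  have gE := @finField_galois F L 1%AS <<1; alpha>>%AS (sub1v _).
  case/and3P: gE => _ _ /normalFieldP nE.
  have [r rE mpr] := nE alpha (memv_adjoin 1 alpha).
  move=> b brs; have : root (minPoly 1 alpha) b by rewrite mpE qE root_prod_XsubC.
  rewrite mpr root_prod_XsubC => br; exact: (allP rE).
have fixall : forall t : gal_of {:L}, t alpha = alpha -> forall x, t x = x.
  move=> t ta x.
  have xE : x \in <<1; alpha>>%VS.
    have : (<<1 & rs>> <= <<1; alpha>>)%VS.
      by apply/Fadjoin_seqP; split; [exact: sub1v | exact: allE].
    by rewrite defL => /subvP; apply; rewrite memvf.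
  have [p p1 ->] := Fadjoin_polyP xE.
  by rewrite -horner_map /= ta (fixedPoly_gal (sub1v _) (gal_in t) p1).
have trans : forall b, b \in rs -> exists t : gal_of {:L}, t alpha = b.
  move=> b brs.
  have rb : root (minPoly 1 alpha) b by rewrite mpE qE root_prod_XsubC.
  have [t0 _ tb] := normalField_root_minPoly (sub1v _) (normalFieldf 1) (memvf alpha) rb.
  by exists t0.
have mapW : forall (tau : gal_of {:L}) b, map_poly tau (fL - b *: gL) = fL - tau b *: gL.
  move=> tau b; rewrite rmorphB /= -mul_polyC rmorphM /= map_polyC /= mul_polyC.
  by rewrite /fL /gL !fix_alg.
pose A := fun P : {poly F} => [/\ P \is monic, irreducible_poly P & P %| Q].
pose B := fun h : {poly L} => [/\ h \is monic, irreducible_poly h & h %| W].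
pose R := fun (P : {poly F}) (h : {poly L}) => h %| map_poly (in_alg L) P.
have ex1 : forall P, A P -> exists h, B h /\ R P h.
  move=> P [mP iP dP].
  have sPL : (1 < size (map_poly (in_alg L) P))%N by rewrite size_map_poly; case: iP.
  have [h0 [m0 i0 d0]] := irr_factor sPL.
  have : h0 %| \prod_(z <- rs) (fL - z *: gL).
    by rewrite -QE; apply: dvdp_trans d0 _; rewrite dvdp_map.
  case/(irr_dvd_prod i0) => b brs hb.
  have [tau tb] := trans b brs.
  pose s := (tau^-1)%g.
  have sb : s b = alpha by rewrite -tb -galM ?memvf // mulgV gal_id.
  have sz : (1 < size (map_poly s h0))%N by rewrite size_map_poly; case: i0.
  have [h [m i dh]] := irr_factor sz.
  exists h; split; last first.
    by apply: dvdp_trans dh _; rewrite -(fix_alg s P) dvdp_map.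
  split=> //; apply: dvdp_trans dh _; rewrite /W -sb -mapW dvdp_map.
  by [].
have un1 : forall P h1 h2, A P -> B h1 -> B h2 -> R P h1 -> R P h2 -> h1 = h2.
  move=> P h1 h2 [mP iP dP] [m1 i1 w1] [m2 i2 w2] r1 r2.
  pose N := \prod_(tau : gal_of {:L}) map_poly tau h1.
  have fixN : forall s : gal_of {:L}, map_poly s N = N.
    move=> s; rewrite /N rmorph_prod /= [RHS](reindex_inj (mulIg s)) /=.
    by apply: eq_bigr => tau _; rewrite map_gal_comp.
  have [N0 DN] := fixed_poly_alg fixN.
  have h1N : h1 %| N by rewrite /N (bigD1 (1%g : gal_of {:L})) //= map_gal1 dvdp_mulr.
  have PN0 : P %| N0.
    case: (irredp_XsubCP iP (dvdp_gcdl P N0)) => e; last first.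
      by rewrite -(eqp_dvdl _ e) dvdp_gcdr.
    exfalso; rewrite gcdp_eqp1 in e.
    have : coprimep (map_poly (in_alg L) P) (map_poly (in_alg L) N0) by rewrite coprimep_map.
    move/coprimepP => /(_ h1 r1); rewrite -DN => /(_ h1N).
    by rewrite -size_poly_eq1 => /eqP e1; case: i1; rewrite e1.
  have : h2 %| N by apply: dvdp_trans r2 _; rewrite DN dvdp_map.
  case/(irr_dvd_prod i2) => tau _ h2t.
  have tfix : tau alpha = alpha.
    apply/eqP; apply/negP => /negP ne.
    apply: (Kdist h2 alpha (tau alpha) i2 _ w2).
      by rewrite eq_sym.
    by apply: dvdp_trans h2t _; rewrite -mapW dvdp_map.
  have e1 : map_poly tau h1 = h1.
    by apply/polyP => i; rewrite coef_map /= fixall.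
  rewrite e1 in h2t.
  case: (irredp_XsubCP i1 h2t) => e.
    by exfalso; case: i2; rewrite -size_poly_eq1 in e; rewrite (eqP e).
  by apply/esym/eqP; rewrite -(eqp_monic m2 m1).
have ex2 : forall h, B h -> exists P, A P /\ R P h.
  move=> h [mh ih wh].
  have nzQL : map_poly (in_alg L) Q != 0 by rewrite map_poly_eq0.
  have HM : forall d e : {poly F}, h %| map_poly (in_alg L) (d * e) ->
      h %| map_poly (in_alg L) d \/ h %| map_poly (in_alg L) e.
    by move=> d e; rewrite rmorphM; exact: irr_dvdM ih.
  have Hs : forall d : {poly F}, d != 0 -> h %| map_poly (in_alg L) d -> (1 < size d)%N.
    move=> d nzd hd; rewrite -(size_map_poly (in_alg L) d).
    have := dvdp_leq _ hd; rewrite map_poly_eq0 => /(_ nzd).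
    by apply: leq_trans; case: ih.
  have HZ : forall c (d : {poly F}), c != 0 -> h %| map_poly (in_alg L) d ->
      h %| map_poly (in_alg L) (c *: d).
    by move=> c d c0; rewrite map_polyZ dvdpZr // fmorph_eq0.
  have [P [m i d Pr]] := @irr_factor_gen F (fun d => h %| map_poly (in_alg L) d)
     HM Hs HZ Q nzQ (dvdp_trans wh WQ).
  by exists P.
have un2 : forall h P1 P2, B h -> A P1 -> A P2 -> R P1 h -> R P2 h -> P1 = P2.
  move=> h P1 P2 [mh ih wh] [m1 i1 d1] [m2 i2 d2] r1 r2.
  apply: NNPP => /eqP ne.
  have := mon_irr_coprime m1 m2 i1 i2 ne.
  rewrite -(coprimep_map (in_alg L)) => /coprimepP /(_ h r1 r2).
  by rewrite -size_poly_eq1 => /eqP e; case: ih; rewrite e.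
have [U HU] := poly_bounded F (size Q).
have [sA [uA HA]] := @list_of_pred _ U A
   (fun P '(And3 _ _ d) => HU P (dvdp_leq nzQ d)).
have [sB [uB HB sz]] := count_match uA HA ex1 un1 ex2 un2.
exists (size sA); split.
  by exists sA; split.
by exists sB; split.
Qed.

Unset Implicit Arguments.

Theorem mainTheorem3 (F : finFieldType) (f g q : {poly F})
  (L : fieldExtType F) (alpha : L) :
  coprimep f g ->
  q \is monic -> irreducible_poly q ->
  homogp q g f != 0 ->
  splittingFieldFor 1%VS (map_poly (in_alg L) q) fullv ->
  root (map_poly (in_alg L) q) alpha ->
  exists n : nat,
    num_monic_irr_factors (homogp q g f) n /\
    num_monic_irr_factors (map_poly (in_alg L) f - alpha *: map_poly (in_alg L) g) n.
Proof.
exact: (@main_split F f g q (FinSplittingFieldType F L) alpha).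
Qed.
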